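(* Let $\alpha>0$ and let $Y,y\in\mathbb{R}$ satisfy $-Y\leq y\leq Y$. Define $g_{\alpha,Y}:\mathbb{R}\to\mathbb{R}$ by $$g_{\alpha,Y}(z)=\operatorname{sign}(z)\left(Y\sqrt{\alpha |z|+1}-Y\right),$$ that is, $g_{\alpha,Y}(z)=Y\sqrt{\alpha z+1}-Y$ for $z\geq 0$ and $g_{\alpha,Y}(z)=-Y\sqrt{-\alpha z+1}+Y$ for $z<0$. Then the function $z\mapsto l_y(g_{\alpha,Y}(z))=(g_{\alpha,Y}(z)-y)^2$ is convex on $\mathbb{R}$.
   Context: Here $l_y(\hat y)=(\hat y-y)^2$ denotes the square (L2) loss of a prediction $\hat y$ against the target $y$, and $\operatorname{sign}(z)$ is $1$ for $z>0$, $-1$ for $z<0$, and $0$ for $z=0$. *)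

(* Defs.v *)
From Stdlib Require Import Reals Lra.
Open Scope R_scope.

Definition sign (z : R) : R :=
  match Rlt_dec 0 z with
  | left _ => 1
  | right _ => match Rlt_dec z 0 with left _ => -1 | right _ => 0 end
  end.

Definition sq_loss (y yhat : R) : R := (yhat - y) ^ 2.

Definition g_fun (alpha Y z : R) : R :=
  sign z * (Y * sqrt (alpha * Rabs z + 1) - Y).

Definition convex_on_R (f : R -> R) : Prop :=
  forall x1 x2 t : R, 0 <= t <= 1 ->
    f (t * x1 + (1 - t) * x2) <= t * f x1 + (1 - t) * f x2.

(* Main.v *)
Require Import Defs.
From Stdlib Require Import Reals.
From Stdlib Require Import Lra Psatz.
Open Scope R_scope.

Lemma sqrt_conc (a b t : R) : 0 <= a -> 0 <= b -> 0 <= t <= 1 ->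
  t * sqrt a + (1 - t) * sqrt b <= sqrt (t * a + (1 - t) * b).
Proof.
  intros Ha Hb Ht.
  pose proof (sqrt_pos a). pose proof (sqrt_pos b).
  pose proof (sqrt_sqrt a Ha). pose proof (sqrt_sqrt b Hb).
  set (sa := sqrt a) in *. set (sb := sqrt b) in *.
  assert (Hp : 0 <= t * sa + (1 - t) * sb) by nra.
  rewrite <- (sqrt_pow2 (t * sa + (1 - t) * sb)) by exact Hp.
  apply sqrt_le_1_alt.
  rewrite <- H1, <- H2.
  assert (0 <= t * (1 - t) * (sa - sb) ^ 2).
  { apply Rmult_le_pos; [nra | apply pow2_ge_0]. }
  nra.
Qed.

Definition kf (alpha w : R) := alpha * w / 2 + 1 - sqrt (alpha * w + 1).

Lemma kf_conv alpha w1 w2 t : 0 < alpha -> 0 <= w1 -> 0 <= w2 -> 0 <= t <= 1 ->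
  kf alpha (t * w1 + (1 - t) * w2) <= t * kf alpha w1 + (1 - t) * kf alpha w2.
Proof.
  intros Ha H1 H2 Ht. unfold kf.
  pose proof (sqrt_conc (alpha * w1 + 1) (alpha * w2 + 1) t ltac:(nra) ltac:(nra) Ht).
  replace (t * (alpha * w1 + 1) + (1 - t) * (alpha * w2 + 1))
    with (alpha * (t * w1 + (1 - t) * w2) + 1) in H by ring.
  lra.
Qed.

Lemma kf_mono alpha w1 w2 : 0 < alpha -> 0 <= w1 -> w1 <= w2 ->
  kf alpha w1 <= kf alpha w2.
Proof.
  intros Ha H1 H2. unfold kf.
  assert (E1 := sqrt_sqrt (alpha * w1 + 1) ltac:(nra)).
  assert (E2 := sqrt_sqrt (alpha * w2 + 1) ltac:(nra)).
  assert (G1 : 1 <= sqrt (alpha * w1 + 1)).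
  { apply Rle_trans with (sqrt 1); [rewrite sqrt_1; lra | apply sqrt_le_1_alt; nra]. }
  assert (G2 : sqrt (alpha * w1 + 1) <= sqrt (alpha * w2 + 1)).
  { apply sqrt_le_1_alt. nra. }
  set (s1 := sqrt (alpha * w1 + 1)) in *. set (s2 := sqrt (alpha * w2 + 1)) in *.
  assert (0 <= (s2 - s1) * (s2 + s1 - 2)) by nra.
  nra.
Qed.

Lemma A_conv alpha x1 x2 t : 0 < alpha -> 0 <= t <= 1 ->
  kf alpha (Rmax (t * x1 + (1 - t) * x2) 0)
  <= t * kf alpha (Rmax x1 0) + (1 - t) * kf alpha (Rmax x2 0).
Proof.
  intros Ha Ht.
  assert (M : Rmax (t * x1 + (1 - t) * x2) 0 <= t * Rmax x1 0 + (1 - t) * Rmax x2 0).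
  { unfold Rmax; repeat destruct Rle_dec; nra. }
  eapply Rle_trans.
  - apply kf_mono; [exact Ha | | exact M].
    unfold Rmax; destruct Rle_dec; lra.
  - apply kf_conv; try assumption; unfold Rmax; destruct Rle_dec; lra.
Qed.

Lemma f_eq alpha Y y z : 0 < alpha ->
  sq_loss y (g_fun alpha Y z) =
  y ^ 2 - alpha * Y * y * z + 2 * Y * (Y + y) * kf alpha (Rmax z 0)
  + 2 * Y * (Y - y) * kf alpha (Rmax (- z) 0).
Proof.
  intros Ha. unfold sq_loss, g_fun, sign, kf.
  destruct (Rlt_dec 0 z) as [Hz|Hz].
  - rewrite Rabs_right by lra.
    rewrite (Rmax_left z 0) by lra. rewrite (Rmax_right (-z) 0) by lra.
    replace (alpha * 0 + 1) with 1 by ring. rewrite sqrt_1.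
    assert (E := sqrt_sqrt (alpha * z + 1) ltac:(nra)).
    set (s := sqrt (alpha * z + 1)) in *.
    replace (alpha * Y * y * z) with (Y * y * (s * s - 1)) by (rewrite E; ring).
    replace (alpha * z) with (s * s - 1) by lra. field.
  - destruct (Rlt_dec z 0) as [Hz'|Hz'].
    + rewrite Rabs_left by lra.
      rewrite (Rmax_right z 0) by lra. rewrite (Rmax_left (-z) 0) by lra.
      replace (alpha * 0 + 1) with 1 by ring. rewrite sqrt_1.
      assert (E := sqrt_sqrt (alpha * - z + 1) ltac:(nra)).
      revert E. generalize (sqrt (alpha * - z + 1)). intros s E.
      replace (alpha * Y * y * z) with (- (Y * y * (s * s - 1))) by (rewrite E; ring).
      replace (alpha * - z) with (s * s - 1) by lra. field.
    + assert (z = 0) by lra. subst z.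
      rewrite Rmax_left by lra. replace (-0) with 0 by ring.
      rewrite Rmax_left by lra. replace (alpha * 0 + 1) with 1 by ring. rewrite sqrt_1. field.
Qed.

Theorem mainTheorem1 (alpha Y y : R) (Halpha : 0 < alpha)
  (Hy : - Y <= y <= Y) :
  convex_on_R (fun z => sq_loss y (g_fun alpha Y z)).
Proof.
  intros x1 x2 t Ht. rewrite !f_eq by exact Halpha.
  pose proof (A_conv alpha x1 x2 t Halpha Ht) as HA.
  pose proof (A_conv alpha (-x1) (-x2) t Halpha Ht) as HB.
  replace (t * - x1 + (1 - t) * - x2) with (- (t * x1 + (1 - t) * x2)) in HB by ring.
  assert (c1 : 0 <= 2 * Y * (Y + y)) by nra.
  assert (c2 : 0 <= 2 * Y * (Y - y)) by nra.
  set (a := kf alpha (Rmax (t * x1 + (1 - t) * x2) 0)) in *.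
  set (b := kf alpha (Rmax (- (t * x1 + (1 - t) * x2)) 0)) in *.
  set (a1 := kf alpha (Rmax x1 0)) in *. set (a2 := kf alpha (Rmax x2 0)) in *.
  set (b1 := kf alpha (Rmax (-x1) 0)) in *. set (b2 := kf alpha (Rmax (-x2) 0)) in *.
  assert (2 * Y * (Y + y) * a <= 2 * Y * (Y + y) * (t * a1 + (1 - t) * a2))
    by (apply Rmult_le_compat_l; assumption).
  assert (2 * Y * (Y - y) * b <= 2 * Y * (Y - y) * (t * b1 + (1 - t) * b2))
    by (apply Rmult_le_compat_l; assumption).
  nra.
Qed.
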